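(* Let $G$ be a group with neutral element $e$ and let $A=\bigoplus_{g\in G}A_g$ be a strongly $G$-graded algebra ($A_gA_h=A_{gh}$) with $A_e=\mathbb{C}$ and each $A_g$ one-dimensional (equivalently, a $\mathbb{C}[G]$-Galois object). Choose $0\neq u_g\in A_g$ for each $g$, and let $\lambda:G\times G\to\mathbb{C}^\times$ be defined by $u_gu_h=\lambda(g,h)u_{gh}$ (a 2-cocycle). Then $\Lambda(g,h):=\lambda(g,h)\lambda(h^{-1},g^{-1})$ is trivial in $H^2(G,\mathbb{C}^\times)$, i.e. there is a map $\mu:G\to\mathbb{C}^\times$ with $\Lambda(g,h)=\mu(g)\mu(h)\mu(gh)^{-1}$ for all $g,h\in G$.
   Context: $H^2(G,\mathbb{C}^\times)$ is the second group cohomology of $G$ with coefficients in $\mathbb{C}^\times$ (trivial action): 2-cocycles are maps $\lambda:G\times G\to\mathbb{C}^\times$ with $\lambda(g,h)\lambda(gh,k)=\lambda(h,k)\lambda(g,hk)$, modulo coboundaries $(g,h)\mapsto\mu(g)\mu(h)\mu(gh)^{-1}$. *)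

(* Defs.v *)
From HB Require Import structures.
From mathcomp Require Import all_boot all_order all_algebra.
From mathcomp Require Import all_reals.
From mathcomp.real_closed Require Export complex.
From Stdlib Require Import List.
Set Implicit Arguments. Unset Strict Implicit. Unset Printing Implicit Defensive.
Import GRing.Theory.
Local Open Scope ring_scope.

(* The complex numbers are modelled as R[i] for an arbitrary R : realType.
   A group G (possibly infinite) is given by its carrier type and operations. *)
Definition is_group (G : Type) (mul : G -> G -> G) (inv : G -> G) (e : G) : Prop :=
  [/\ forall x y z, mul x (mul y z) = mul (mul x y) z,
      forall x, mul e x = x, forall x, mul x e = x,
      forall x, mul (inv x) x = e & forall x, mul x (inv x) = e].

Definition graded_direct_sum (C : pzRingType) (G : Type) (A : lalgType C)
    (Ag : G -> A -> Prop) : Prop :=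
  (forall a : A, exists (s : list G) (x : G -> A),
      (forall g, Ag g (x g)) /\ a = \sum_(g <- s) x g) /\
  (forall (s : list G) (x : G -> A), NoDup s -> (forall g, Ag g (x g)) ->
      \sum_(g <- s) x g = 0 -> forall g, In g s -> x g = 0).

Definition one_dimensional (C : pzRingType) (A : lmodType C) (P : A -> Prop) : Prop :=
  exists v : A, v != 0 /\ forall x, P x <-> exists c : C, x = c *: v.

(* Strong grading: A_g A_h = A_{gh}, where A_g A_h is the span of the
   products a b with a in A_g, b in A_h. *)
Definition strongly_graded (C : pzRingType) (G : Type) (mul : G -> G -> G)
    (A : lalgType C) (Ag : G -> A -> Prop) : Prop :=
  forall g h,
    (forall a b, Ag g a -> Ag h b -> Ag (mul g h) (a * b)) /\
    (forall c, Ag (mul g h) c -> exists (s : list (A * A)),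
        (forall p, In p s -> Ag g p.1 /\ Ag h p.2) /\
        c = \sum_(p <- s) (p.1 * p.2)).

(* Main.v *)
Require Import Defs.
From HB Require Import structures.
From mathcomp Require Import all_boot all_order all_algebra.
From mathcomp Require Import all_reals.
From mathcomp.real_closed Require Import complex.
From Stdlib Require Import List.
Import GRing.Theory.
Local Open Scope ring_scope.

Theorem lemma4p6 (R : realType) (G : Type) (mul : G -> G -> G) (inv : G -> G) (e : G)
    (A : algType R[i]) (Ag : G -> A -> Prop)
    (u : G -> A) (lambda : G -> G -> R[i]) :
  is_group mul inv e ->
  graded_direct_sum Ag ->
  strongly_graded mul Ag ->
  (forall x : A, Ag e x <-> exists c : R[i], x = c *: 1) ->
  (forall g, one_dimensional (Ag g)) ->
  (forall g, Ag g (u g) /\ u g != 0) ->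
  (forall g h, u g * u h = lambda g h *: u (mul g h)) ->
  exists mu : G -> R[i],
    (forall g, mu g != 0) /\
    forall g h, lambda g h * lambda (inv h) (inv g) = mu g * mu h / mu (mul g h).
Proof.
move=> [mA m1l m1r mVl mVr] _ Hsg He H1d Hu Hm.
have [ce Hce] : exists c, u e = c *: 1 by apply/He; exact: (Hu e).1.
have invM : forall g h, inv (mul g h) = mul (inv h) (inv g).
  move=> g h.
  have E : mul (mul g h) (mul (inv h) (inv g)) = e.
    by rewrite -mA (mA h) mVr m1l mVr.
  by rewrite -[inv _]m1r -E mA mVl m1l.
have Hrep : forall g x, Ag g x -> exists a, x = a *: u g.
  move=> g x Hx; have [v [v0 Hv]] := H1d g.
  have [c Hc] := (Hv (u g)).1 (Hu g).1.
  have [d Hd] := (Hv x).1 Hx.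
  have c0 : c != 0.
    by apply/negP=> /eqP c0; move: (Hu g).2; rewrite Hc c0 scale0r eqxx.
  by exists (d / c); rewrite Hc scalerA mulfVK.
have one0 : (1 : A) != 0.
  apply/negP=> /eqP o; move: (Hu e).2; by rewrite -[u e]mulr1 o mulr0 eqxx.
pose nu g := lambda g (inv g) * ce.
have Hnu : forall g, u g * u (inv g) = nu g *: 1.
  by move=> g; rewrite Hm mVr Hce scalerA.
have nu0 : forall g, nu g != 0.
  move=> g; apply/negP=> /eqP n0.
  have [_ H2] := Hsg g (inv g).
  have [s [Hs E]] : exists s : list (A * A),
     (forall p, In p s -> Ag g p.1 /\ Ag (inv g) p.2) /\ 1 = \sum_(p <- s) (p.1 * p.2).
    apply: H2; rewrite mVr; apply/He; exists 1; by rewrite scale1r.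
  have : \sum_(p <- s) (p.1 * p.2) = 0.
    elim: s Hs {E} => [|p s IH] Hs; first by rewrite big_nil.
    rewrite big_cons IH; last by move=> q Hq; apply: Hs; right.
    have [Ha Hb] := Hs p (or_introl erefl).
    have [a ->] := Hrep _ _ Ha; have [b ->] := Hrep _ _ Hb.
    by rewrite -scalerAl -scalerAr Hnu n0 scale0r !scaler0 addr0.
  by rewrite -E => /eqP; rewrite (negbTE one0).
exists nu; split => // g h.
have E1 : u g * u h * (u (inv h) * u (inv g)) = (nu h * nu g) *: 1.
  by rewrite -mulrA (mulrA (u h)) Hnu -scalerAl mul1r -scalerAr Hnu scalerA.
have E2 : u g * u h * (u (inv h) * u (inv g))
   = (lambda g h * lambda (inv h) (inv g) * nu (mul g h)) *: 1.
  by rewrite !Hm -invM -scalerAl -scalerAr Hnu !scalerA.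
have : (nu h * nu g - lambda g h * lambda (inv h) (inv g) * nu (mul g h)) *: (1:A) = 0.
  by rewrite scalerBl -E1 -E2 subrr.
move/eqP; rewrite scaler_eq0 (negbTE one0) orbF subr_eq0 => /eqP E.
apply: (mulIf (nu0 (mul g h))); rewrite (divfK (nu0 _)) -E; exact: (mulrC (nu h) (nu g)).
Qed.
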